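(* Let $C\subseteq\mathbb{F}_2^n$ be a code, $x\in C$ and $y\in\mathbb{F}_2^n$. Then $D_C(y)=x$ provided that one of the following holds: (1) $\delta(y,x)<\frac{\delta(C)+(\omega^{\mathrm{H}}(y)-\omega^{\mathrm{H}}(x))(\gamma-1)}{2}$, or (2) $\delta(y,x)<\frac{\hat\delta(C)+\omega^{\mathrm{H}}(y)(\gamma-1)}{2}$.
   Context: Let $n\ge2$ and fix reals $0<p\le q<1/2$. Let $\mathbb{P}^n(y\mid x)=\prod_{i=1}^n\mathbb{P}(y_i\mid x_i)$ where $\mathbb{P}(1\mid0)=p$, $\mathbb{P}(0\mid0)=1-p$, $\mathbb{P}(0\mid1)=q$, $\mathbb{P}(1\mid1)=1-q$. Let $\gamma:=\log_{q/(1-p)}\left(\frac{p}{1-q}\right)$. For $x\in\mathbb{F}_2^n$, $\omega^{\mathrm{H}}(x)=|\{i:x_i=1\}|$; for $a,b\in\{0,1\}$, $d_{ab}(y,x)=|\{i: y_i=a,\ x_i=b\}|$. Discrepancy: $\delta(y,x):=\gamma\,d_{10}(y,x)+d_{01}(y,x)$; symmetric discrepancy: $\hat\delta(y,x):=\delta(y,x)-\omega^{\mathrm{H}}(y)(\gamma-1)$. A code is a subset $C\subseteq\mathbb{F}_2^n$ with $|C|\ge2$; its minimum discrepancy is $\delta(C)=\min\{\delta(x,x'):x,x'\in C,\ x\ne x'\}$ and its minimum symmetric discrepancy is $\hat\delta(C)=\min\{\hat\delta(x,x'):x,x'\in C,\ x\ne x'\}$. The maximum likelihood decoder $D_C:\mathbb{F}_2^n\to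 C\cup\{\mathbf f\}$ sends $y$ to $x$ if $x$ is the unique codeword maximizing $\mathbb{P}^n(y\mid x)$, and to a failure symbol $\mathbf f\notin\mathbb{F}_2^n$ otherwise. *)

(* Defs.v *)
From mathcomp Require Import all_boot all_order all_algebra.
From mathcomp Require Import reals exp.
Set Implicit Arguments. Unset Strict Implicit. Unset Printing Implicit Defensive.
Import Order.TTheory GRing.Theory Num.Theory.
Local Open Scope ring_scope.

(* Words of F_2^n, with F_2 represented by bool (true = 1). *)
Definition word (n : nat) := {ffun 'I_n -> bool}.

Section Channel.
Variables (R : realType) (p q : R) (n : nat).

(* single-letter channel: chan b a = P(b | a) *)
Definition chan (b a : bool) : R :=
  match a, b with
  | false, true => p
  | false, false => 1 - p
  | true, false => q
  | true, true => 1 - q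
  end.

Definition Pn (y x : word n) : R := \prod_(i < n) chan (y i) (x i).

(* gamma = log_{q/(1-p)} (p/(1-q)) *)
Definition gamma : R := ln (p / (1 - q)) / ln (q / (1 - p)).

Definition wH (x : word n) : nat := #|[set i | x i]|.

Definition dab (a b : bool) (y x : word n) : nat :=
  #|[set i | (y i == a) && (x i == b)]|.

Definition delta (y x : word n) : R :=
  gamma * (dab true false y x)%:R + (dab false true y x)%:R.

Definition sdelta (y x : word n) : R :=
  delta y x - (wH y)%:R * (gamma - 1).

(* minimum of f over pairs of distinct codewords of C (0 if there are none) *)
Definition minpair (C : {set word n}) (f : word n -> word n -> R) : R :=
  match [pick xx : word n * word n | [&& xx.1 \in C, xx.2 \in C & xx.1 != xx.2]] with
  | Some xx0 =>
      \big[Num.min/f xx0.1 xx0.2]_(xx : word n * word n |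
             [&& xx.1 \in C, xx.2 \in C & xx.1 != xx.2]) f xx.1 xx.2
  | None => 0
  end.

Definition delta_code (C : {set word n}) : R := minpair C delta.
Definition sdelta_code (C : {set word n}) : R := minpair C sdelta.

(* maximum likelihood decoder; None is the failure symbol f *)
Definition ML_maximizers (C : {set word n}) (y : word n) : {set word n} :=
  [set x in C | [forall x' in C, Pn y x' <= Pn y x]].

Definition ML_decode (C : {set word n}) (y : word n) : option (word n) :=
  if #|ML_maximizers C y| == 1%N then [pick x in ML_maximizers C y] else None.

End Channel.

(* Main.v *)
Require Import Defs.
From mathcomp Require Import all_boot all_order all_algebra.
From mathcomp Require Import reals exp.
From mathcomp Require Import sequences lra.
Import Order.TTheory GRing.Theory Num.Theory.
Local Open Scope ring_scope.
Set Implicit Arguments. Unset Strict Implicit.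

Lemma facts (R : realType) (p q : R) : 0 < p -> p <= q -> q < 1/2 ->
  [/\ 0 < p, 0 < q, 0 < 1 - p, 0 < 1 - q & q < 1 - p /\ p < 1 - q].
Proof. move=> *; split; lra. Qed.

Lemma lem1 (R : realType) (d1 d2 D c t : R) :
  c <= D -> D + t <= d1 + d2 -> d1 < (c + t) / 2 -> d1 < d2.
Proof. move=> *; lra. Qed.

Lemma lem2 (R : realType) (d1 d2 D c a b : R) :
  c <= D - b -> D + (a - b) <= d1 + d2 -> d1 < (c + a) / 2 -> d1 < d2.
Proof. move=> *; lra. Qed.

Section Aux.
Variables (R : realType) (p q : R) (n : nat).
Hypotheses (hp : 0 < p) (hpq : p <= q) (hq : q < 1 / 2).

Definition dl (u v : bool) : R :=
  if u then (if v then 0 else gamma p q) else (if v then 1 else 0).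

Lemma cnt (P : pred 'I_n) : (#|[set i | P i]|)%:R = \sum_i (P i)%:R :> R.
Proof.
rewrite -sum1_card natr_sum big_mkcond /=; apply: eq_bigr => i _.
by rewrite inE; case: (P i).
Qed.

Lemma delta_sum (y x : word n) : delta p q y x = \sum_i dl (y i) (x i).
Proof.
rewrite /delta /dab !cnt mulr_sumr -big_split /=; apply: eq_bigr => i _.
by rewrite /dl; case: (y i); case: (x i) => /=; rewrite ?mulr0 ?mulr1 ?addr0 ?add0r.
Qed.

Lemma wH_sum (x : word n) : (wH x)%:R = \sum_i (x i)%:R :> R.
Proof. exact: (cnt (fun i => x i)). Qed.

Let F := facts hp hpq hq.
Let A := ln (q / (1 - p)).
Let B := ln (p / (1 - q)).

Lemma A_lt0 : A < 0.
Proof.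
have [? ? ? ? [? ?]] := F.
apply: ln_lt0; apply/andP; split.
  apply: divr_gt0; lra.
by rewrite ltr_pdivrMr; lra.
Qed.

Lemma B_lt0 : B < 0.
Proof.
have [? ? ? ? [? ?]] := F.
apply: ln_lt0; apply/andP; split.
  apply: divr_gt0; lra.
by rewrite ltr_pdivrMr; lra.
Qed.

Lemma gamma_gt0 : 0 < gamma p q.
Proof.
rewrite /gamma -/A -/B -mulrNN -invrN; apply: divr_gt0.
  by rewrite oppr_gt0 B_lt0.
by rewrite oppr_gt0 A_lt0.
Qed.

Lemma lnchan (u v : bool) :
  ln (chan p q u v) = (if u then ln (1 - q) else ln (1 - p)) + A * dl u v.
Proof.
have hA := A_lt0.
have [? ? ? ? [? ?]] := F.
have eB : B = ln p - ln (1 - q).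
  rewrite /B lnM ?posrE ?invr_gt0 // lnV // posrE //.
have eA : A = ln q - ln (1 - p).
  rewrite /A lnM ?posrE ?invr_gt0 // lnV // posrE //.
rewrite /chan /dl; case: u; case: v => /=; rewrite ?mulr0 ?addr0 //.
- rewrite /gamma -/A -/B mulrC divfK; last by rewrite lt_eqF.
  by rewrite eB addrC subrK.
- by rewrite mulr1 eA addrC subrK.
Qed.

Lemma chan_gt0 u v : 0 < chan p q u v.
Proof. have [? ? ? ? [? ?]] := F. rewrite /chan; case: u; case: v; lra. Qed.

Lemma Pn_exp (y x : word n) :
  Pn p q y x = expR (\sum_i (if y i then ln (1 - q) else ln (1 - p)) + A * delta p q y x).
Proof.
rewrite delta_sum mulr_sumr -big_split expR_sum /Pn; apply: eq_bigr => i _.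
by rewrite /= -lnchan lnK // posrE chan_gt0.
Qed.

Lemma Pn_lt (y x x' : word n) : delta p q y x < delta p q y x' -> Pn p q y x' < Pn p q y x.
Proof.
move=> h; rewrite !Pn_exp ltr_expR ltrD2l.
by rewrite ltr_nM2l // A_lt0.
Qed.

Lemma tri (y x x' : word n) :
  delta p q x x' + ((wH y)%:R - (wH x)%:R) * (gamma p q - 1)
  <= delta p q y x + delta p q y x'.
Proof.
have hg := gamma_gt0.
rewrite !delta_sum !wH_sum -sumrB mulr_suml -!big_split /=.
apply: ler_sum => i _; rewrite /dl.
case: (y i); case: (x i); case: (x' i) => /=; lra.
Qed.

End Aux.

Theorem mainTheorem7 (R : realType) (p q : R) (n : nat)
  (hn : (2 <= n)%N) (hp : 0 < p) (hpq : p <= q) (hq : q < 1 / 2)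
  (C : {set word n}) (hC : (2 <= #|C|)%N) (x y : word n) (hx : x \in C) :
  (delta p q y x < (delta_code p q C
       + ((wH y)%:R - (wH x)%:R) * (gamma p q - 1)) / 2
   \/ delta p q y x < (sdelta_code p q C + (wH y)%:R * (gamma p q - 1)) / 2) ->
  ML_decode p q C y = Some x.
Proof.
move=> H.
have minle : forall (f : word n -> word n -> R) (x1 x2 : word n), x1 \in C -> x2 \in C -> x1 != x2 ->
    minpair C f <= f x1 x2.
  move=> f x1 x2 h1 h2 h12; rewrite /minpair.
  case: pickP => [xx0 _|/(_ (x1, x2))]; last by rewrite /= h1 h2 h12.
  have := @bigmin_le_cond _ _ _ (f xx0.1 xx0.2) (x1, x2)
     (fun xx : word n * word n => [&& xx.1 \in C, xx.2 \in C & xx.1 != xx.2])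
     (fun xx => f xx.1 xx.2).
  by rewrite /= h1 h2 h12 => /(_ isT).
have key : forall x', x' \in C -> x' != x -> Pn p q y x' < Pn p q y x.
  move=> x' hx' hne; apply: Pn_lt => //.
  have ht := tri hp hpq hq y x x'.
  have hxx' : x != x' by rewrite eq_sym.
  case: H => H.
  - exact: (lem1 (minle (@delta R p q n) _ _ hx hx' hxx') ht H).
  - rewrite mulrBl in ht.
    exact: (lem2 (minle (@sdelta R p q n) _ _ hx hx' hxx') ht H).
have hM : ML_maximizers p q C y = [set x].
  apply/setP => z; rewrite !inE.
  have [->|hzx] := eqVneq z x.
    rewrite hx /=; apply/forall_inP => x' hx'.
    have [->|hne] := eqVneq x' x; first exact: lexx.
    exact: ltW (key _ hx' hne).
  apply/negbTE; apply/andP => -[hz /forall_inP/(_ x hx)].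
  by rewrite leNgt (key _ hz hzx).
rewrite /ML_decode hM cards1 eqxx.
case: pickP => [z|/(_ x)]; last by rewrite inE eqxx.
by rewrite inE => /eqP ->.
Qed.
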